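(* Let $n=1$, let $U\subset\mathbb{R}$ be a connected open subset, and let $k$ be a positive integer with binary expansion $k=2^{\mu_r}+2^{\mu_{r-1}}+\cdots+2^{\mu_1}$, $\mu_r>\mu_{r-1}>\cdots>\mu_1\ge0$ integers; set $\mu=\mu_r$ (so $\mu+1$ is the number of binary digits of $k$ and $r$ is the number of digits equal to $1$). Then the Nash function $x\mapsto x^k$ on $U$ satisfies $\mathrm{LC}(x^k)\le \mu+r-1$.
   Context: For an open $U\subset\mathbb{R}^n$ with coordinates $x_1,\dots,x_n$, $\mathcal E(U)$ is the $\mathbb{R}$-algebra of $C^\infty$ functions on $U$, and $\mathcal N(U)$ the set of Nash functions on $U$ (real analytic $f$ on $U$ such that $P(x,f(x))=0$ on $U$ for some non-zero polynomial $P(x,y)$). Let $\mathfrak F$ be the free $\mathcal E(U)$-module on symbols $\mathbf d h$ ($h\in\mathcal E(U)$) and $\mathfrak R\subset\mathfrak F$ the submodule generated by the ''linearity generators'' $\mathbf d(h+k)-\mathbf d h-\mathbf d k$, $\mathbf d(\lambda\ell)-\lambda\mathbf d\ell$ ($\lambda\in\mathbb{R}$) and the ''Leibniz generators'' $\mathbf d(pq)-p\,\mathbf d q-q\,\mathbf d p$ ($h,k,\ell,p,q\in\mathcal E(U)$). For $f\in\mathcal N(U)$, the Leibniz complexity $\mathrm{LC}(f)$ is the minimum, over all $g\in\mathcal N(U)$ not identically zero and all ways of writing $g\big(\mathbf d f-\sum_{i=1}^n\frac{\partial f}{\partial x_i}\mathbf d x_i\big)\in\mathfrak F$ as an $\mathcal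 E(U)$-linear combination of generators of $\mathfrak R$, of the number of Leibniz generators used, where the generator $\mathbf d(1\cdot1)-1\,\mathbf d(1)-1\,\mathbf d(1)$ is not counted (so $\mathbf d c=0$ for constants $c\in\mathbb{R}$ may be used freely) and linearity generators are not counted. *)

(* Defs.v *)
From HB Require Import structures.
From mathcomp Require Import all_boot all_order all_algebra.
From mathcomp Require Import all_classical all_reals all_analysis.
Set Implicit Arguments. Unset Strict Implicit. Unset Printing Implicit Defensive.
Import Order.TTheory GRing.Theory Num.Theory.
Import numFieldNormedType.Exports.
Local Open Scope classical_set_scope.
Local Open Scope ring_scope.

Section LC.
Variable R : realType.

(* Elements of E(U) are represented by functions R -> R, two of them being
   identified when they agree on U. *)
Definition agree_on (U : set R) (f g : R -> R) : Prop := forall x, U x -> f x = g x.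

(* C^oo on the open set U: every iterated derivative is differentiable at every
   point of U (derivatives at points of an open U only depend on values on U). *)
Definition smooth_on (U : set R) (f : R -> R) : Prop :=
  forall (n : nat) (x : R), U x -> derivable (derive1n n f) x 1.

Definition analytic_on (U : set R) (f : R -> R) : Prop :=
  forall x0, U x0 -> exists (r : R) (a : nat -> R), 0 < r /\
    forall x, `|x - x0| < r ->
      ([series a n * (x - x0) ^+ n]_n) @ \oo --> f x.

(* evaluation of a bivariate polynomial P(x,y) : {poly {poly R}}
   (outer variable y, inner variable x) *)
Definition eval2 (P : {poly {poly R}}) (x y : R) : R :=
  (map_poly (fun c : {poly R} => c.[x]) P).[y].

Definition nash_on (U : set R) (f : R -> R) : Prop :=
  analytic_on U f /\
  exists P : {poly {poly R}}, P != 0 /\ forall x, U x -> eval2 P x (f x) = 0.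

(* Elements of the free E(U)-module F on the symbols  d h  are represented by
   finite formal sums: lists of pairs (coefficient, symbol). *)
Definition fsum := seq ((R -> R) * (R -> R)).

Definition coef_at (U : set R) (L : fsum) (s : R -> R) (x : R) : R :=
  \sum_(pr <- L) (if `[< agree_on U pr.2 s >] then pr.1 x else 0).

Definition feq (U : set R) (L1 L2 : fsum) : Prop :=
  forall s x, U x -> coef_at U L1 s x = coef_at U L2 s x.

Definition fscale (c : R -> R) (L : fsum) : fsum :=
  [seq (c \* pr.1, pr.2) | pr <- L].

(* generators of the relation submodule R *)
Inductive gen :=
  | GAdd of (R -> R) & (R -> R)
  | GScal of R & (R -> R)
  | GLeib of (R -> R) & (R -> R).

Definition gen_expand (G : gen) : fsum :=
  match G with
  | GAdd h k => [:: (cst 1, h \+ k); (cst (-1), h); (cst (-1), k)]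
  | GScal l h => [:: (cst 1, (fun x => l * h x)); (cst (- l), h)]
  | GLeib p q => [:: (cst 1, p \* q); (\- p, q); (\- q, p)]
  end.

Definition gen_smooth (U : set R) (G : gen) : Prop :=
  match G with
  | GAdd h k => smooth_on U h /\ smooth_on U k
  | GScal _ h => smooth_on U h
  | GLeib p q => smooth_on U p /\ smooth_on U q
  end.

Definition counted_leib (U : set R) (G : gen) : bool :=
  match G with
  | GLeib p q => ~~ `[< agree_on U p (cst 1) /\ agree_on U q (cst 1) >]
  | _ => false
  end.

Definition comb_expand (C : seq ((R -> R) * gen)) : fsum :=
  flatten [seq fscale cg.1 (gen_expand cg.2) | cg <- C].

Definition comb_ok (U : set R) (C : seq ((R -> R) * gen)) : Prop :=
  forall i, (i < size C)%N ->
    smooth_on U (nth (cst 0, GScal 0 id) C i).1 /\ gen_smooth U (nth (cst 0, GScal 0 id) C i).2.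

Definition n_leib (U : set R) (C : seq ((R -> R) * gen)) : nat :=
  count (fun cg => counted_leib U cg.2) C.

(* LC(f) <= m  (n = 1, coordinate x = id):  f is Nash and there are a Nash g,
   not identically zero on U, and a combination of generators with at most m
   counted Leibniz generators equal in F to  g (df - f' dx). *)
Definition LC_le (U : set R) (f : R -> R) (m : nat) : Prop :=
  nash_on U f /\
  exists (g : R -> R) (C : seq ((R -> R) * gen)),
    [/\ nash_on U g, (exists2 x, U x & g x != 0), comb_ok U C,
        (n_leib U C <= m)%N &
        feq U (comb_expand C) [:: (g, f); (\- (g \* derive1 f), id)]].

End LC.

(* Main.v *)
Require Import Defs.
From HB Require Import structures.
From mathcomp Require Import all_boot all_order all_algebra.
From mathcomp Require Import all_classical all_reals all_analysis.
From mathcomp Require Import ring lra zify.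
Import Order.TTheory GRing.Theory Num.Theory.
Import numFieldNormedType.Exports.
Local Open Scope classical_set_scope.
Local Open Scope ring_scope.

Section Aux.
Variable R : realType.
Variable U : set R.

Definition bi (h s : R -> R) : R := if `[< agree_on U h s >] then 1 else 0.

Lemma ifmul (P : bool) (c : R) : (if P then c else 0) = c * (if P then 1 else 0).
Proof. by case: P; rewrite ?mulr1 ?mulr0. Qed.

Lemma coef_nil s x : coef_at U [::] s x = 0.
Proof. by rewrite /coef_at big_nil. Qed.

Lemma coef_cons (pr : (R -> R) * (R -> R)) L s x :
  coef_at U (pr :: L) s x = pr.1 x * bi pr.2 s + coef_at U L s x.
Proof. by rewrite /coef_at big_cons ifmul. Qed.

Lemma coef_cat L1 L2 s x : coef_at U (L1 ++ L2) s x = coef_at U L1 s x + coef_at U L2 s x.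
Proof. by rewrite /coef_at big_cat. Qed.

Lemma coef_fscale c L s x : coef_at U (fscale c L) s x = c x * coef_at U L s x.
Proof.
rewrite /coef_at /fscale big_map mulr_sumr; apply: eq_bigr => pr _ /=.
by case: ifP; rewrite ?mulr0.
Qed.

Definition Kc C s x := coef_at U (comb_expand C) s x.

Lemma Kc_nil s x : Kc [::] s x = 0.
Proof. exact: coef_nil. Qed.

Lemma Kc_cons c G C s x : Kc ((c, G) :: C) s x = c x * coef_at U (gen_expand G) s x + Kc C s x.
Proof. by rewrite /Kc /comb_expand /= coef_cat coef_fscale. Qed.

Lemma Kc_cat C1 C2 s x : Kc (C1 ++ C2) s x = Kc C1 s x + Kc C2 s x.
Proof. by rewrite /Kc /comb_expand map_cat flatten_cat coef_cat. Qed.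

Definition scaleC (d : R -> R) (C : seq ((R -> R) * gen R)) :=
  [seq (d \* cg.1, cg.2) | cg <- C].

Lemma Kc_scale d C s x : Kc (scaleC d C) s x = d x * Kc C s x.
Proof.
elim: C => [|[c G] C IH]; first by rewrite /= !Kc_nil mulr0.
rewrite /scaleC in IH *; rewrite map_cons.
rewrite /Kc /comb_expand /= coef_cat coef_fscale.
rewrite /Kc /comb_expand in IH; rewrite IH coef_cat coef_fscale /= mulrDr mulrA.
by [].
Qed.

Lemma coef_leib p q s x :
  coef_at U (gen_expand (GLeib p q)) s x = bi (p \* q) s - p x * bi q s - q x * bi p s.
Proof. rewrite /= !coef_cons coef_nil /=. rewrite /cst. lra. Qed.


Notation mon a := (fun y : R => y ^+ a).

Definition Rel (a : nat) C := forall s x, U x ->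
  Kc C s x = bi (mon a) s - bi id s * (a%:R * x ^+ a.-1).

Lemma expr_pred (x : R) a b : (0 < b)%N -> x ^+ a * x ^+ b.-1 = x ^+ (a + b).-1.
Proof. by case: b => // b _; rewrite -exprD addnS. Qed.

Lemma Rel1 : Rel 1 [::].
Proof.
move=> s x _; rewrite Kc_nil.
have -> : mon 1 = id by apply/funext => y; rewrite expr1.
rewrite expr0; ring.
Qed.

Lemma Rel_sq a C : (0 < a)%N -> Rel a C ->
  Rel (a.*2) ((cst 1, GLeib (mon a) (mon a)) :: scaleC (cst 2 \* mon a) C).
Proof.
move=> a0 H s x Ux; rewrite Kc_cons Kc_scale coef_leib H //.
have -> : mon a \* mon a = mon (a.*2) by apply/funext => y; rewrite /= -exprD addnn.
rewrite /= -addnn natrD -(expr_pred x a a a0).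
rewrite /cst; ring.
Qed.

Lemma Rel_mul a b CA CB : (0 < a)%N -> (0 < b)%N -> Rel a CA -> Rel b CB ->
  Rel (a + b) ((cst 1, GLeib (mon a) (mon b)) :: scaleC (mon a) CB ++ scaleC (mon b) CA).
Proof.
move=> a0 b0 HA HB s x Ux; rewrite Kc_cons Kc_cat !Kc_scale coef_leib HA // HB //.
have -> : mon a \* mon b = mon (a + b) by apply/funext => y; rewrite /= -exprD.
have e1 := expr_pred x a b b0; have e2 := expr_pred x b a a0; rewrite addnC in e2.
rewrite natrD mulrDl -{1}e2 -e1 /cst; ring.
Qed.


Lemma nash_mon k : nash_on U (mon k).
Proof.
split.
  move=> x0 _; exists 1, (fun i => ('C(k, i))%:R * x0 ^+ (k - i)); split => // x _.
  apply: cvg_near_cst; exists k.+1 => // n /= Hn.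
  rewrite /series /=.
  rewrite (@big_cat_nat _ _ _ k.+1 0 n) //=.
  rewrite [X in _ + X]big_nat_cond [X in _ + X]big1 ?addr0; last first.
    by move=> i /andP[/andP[Hi _] _]; rewrite bin_small // !mul0r.
  rewrite -{2}(subrK x0 x) (addrC (x - x0)) exprDn big_mkord; apply: eq_bigr => i _.
  rewrite -mulr_natl; ring.
exists ('X - ('X^k)%:P); split; first exact: monic_neq0 (monicXsubC _).
move=> x _; rewrite /eval2 (_ : (fun c : {poly R} => c.[x]) = horner_eval x) //.
by rewrite map_polyXsubC /= hornerXsubC horner_evalE hornerXn subrr.
Qed.


Definition polyfun (f : R -> R) := exists p : {poly R}, f = horner p.

Definition genpf (G : gen R) : Prop :=
  match G with
  | GAdd h k => polyfun h /\ polyfun k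
  | GScal _ h => polyfun h
  | GLeib p q => polyfun p /\ polyfun q
  end.

Fixpoint pok (C : seq ((R -> R) * gen R)) : Prop :=
  match C with
  | [::] => True
  | cg :: C' => [/\ polyfun cg.1, genpf cg.2 & pok C']
  end.

Lemma polyfun_mul f g : polyfun f -> polyfun g -> polyfun (f \* g).
Proof.
move=> [p ->] [q ->]; exists (p * q); apply/funext => y /=; by rewrite hornerM.
Qed.

Lemma polyfun_cst c : polyfun (cst c).
Proof. by exists c%:P; apply/funext => y; rewrite hornerC. Qed.

Lemma polyfun_mon a : polyfun (mon a).
Proof. by exists 'X^a; apply/funext => y; rewrite hornerXn. Qed.

Lemma smooth_poly p : smooth_on U (horner p).
Proof.
move=> n x _; elim: n p => [|n IH] p; first exact: derivable_horner.
rewrite /derive1n iterSr -derivE; exact: IH.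
Qed.

Lemma polyfun_smooth f : polyfun f -> smooth_on U f.
Proof. by move=> [p ->]; exact: smooth_poly. Qed.

Lemma pok_cat C1 C2 : pok C1 -> pok C2 -> pok (C1 ++ C2).
Proof. by elim: C1 => //= cg C1 IH [? ? ?] ?; split => //; apply: IH. Qed.

Lemma pok_scale d C : polyfun d -> pok C -> pok (scaleC d C).
Proof.
move=> hd; elim: C => //= cg C IH [? ? ?]; split => //; first exact: polyfun_mul.
exact: IH.
Qed.

Lemma pok_ok C : pok C -> comb_ok U C.
Proof.
elim: C => [|[c G] C IH] /= Hp i Hi //.
case: Hp => hc hG hC; case: i Hi => [|i] Hi /=.
  clear Hi; split; first exact: polyfun_smooth.
  by case: G hG => /= [h k [? ?]|l h ?|p q [? ?]]; do ?split; apply: polyfun_smooth.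
exact: IH.
Qed.

Lemma nleib_cons cg C : (n_leib U (cg :: C) <= (n_leib U C).+1)%N.
Proof. by rewrite /n_leib /= -addn1 addnC leq_add2l leq_b1. Qed.

Lemma nleib_cat C1 C2 : n_leib U (C1 ++ C2) = (n_leib U C1 + n_leib U C2)%N.
Proof. by rewrite /n_leib count_cat. Qed.

Lemma nleib_scale d C : n_leib U (scaleC d C) = n_leib U C.
Proof. by rewrite /n_leib /scaleC count_map. Qed.

Definition Good a c := exists C, [/\ Rel a C, pok C & (n_leib U C <= c)%N].

Lemma Good_mono a c c' : (c <= c')%N -> Good a c -> Good a c'.
Proof. by move=> h [C [? ? ?]]; exists C; split => //; apply: leq_trans h. Qed.

Lemma Good1 : Good 1 0.
Proof. by exists [::]; split => //; exact: Rel1. Qed.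

Lemma Good_sq a c : (0 < a)%N -> Good a c -> Good (a.*2) c.+1.
Proof.
move=> a0 [C [HR Hp Hn]].
exists ((cst 1, GLeib (mon a) (mon a)) :: scaleC (cst 2 \* mon a) C); split; first exact: Rel_sq.
  split => //=; [exact: polyfun_cst | split; exact: polyfun_mon |].
  by apply: pok_scale => //; apply: polyfun_mul; [exact: polyfun_cst|exact: polyfun_mon].
by apply: leq_trans (nleib_cons _ _) _; rewrite nleib_scale.
Qed.

Lemma Good_x a c : (0 < a)%N -> Good a c -> Good a.+1 c.+1.
Proof.
move=> a0 [C [HR Hp Hn]]; rewrite -addn1.
exists ((cst 1, GLeib (mon a) (mon 1)) :: scaleC (mon a) [::] ++ scaleC (mon 1) C); split.
- exact: (@Rel_mul a 1 C [::] a0 (isT : (0 < 1)%N) HR (Rel1)).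
- split => //=; [exact: polyfun_cst | split; exact: polyfun_mon |].
  by apply: pok_scale => //; exact: polyfun_mon.
- by apply: leq_trans (nleib_cons _ _) _; rewrite nleib_cat !nleib_scale.
Qed.

Lemma Good_pow a c j : (0 < a)%N -> Good a c -> Good (a * 2 ^ j) (c + j).
Proof.
move=> a0 H; elim: j => [|j IH]; first by rewrite muln1 addn0.
rewrite expnS mulnCA mul2n addnS; apply: Good_sq => //.
by rewrite muln_gt0 a0 expn_gt0.
Qed.

Lemma ltn_pmul2l_aux a t m : (0 < a)%N -> (0 < a * 2 ^ (t - m))%N.
Proof. by move=> a0; rewrite muln_gt0 a0 expn_gt0. Qed.

Lemma Good_claim (mus : seq nat) : forall a c t, (0 < a)%N -> Good a c ->
  sorted (fun a b : nat => (b < a)%N) mus -> all (fun m => (m < t)%N) mus ->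
  Good (a * 2 ^ t + \sum_(m <- mus) 2 ^ m)%N (c + t + size mus).
Proof.
elim: mus => [|m rest IH] a c t a0 Hg Hs Ha.
  by rewrite big_nil !addn0; apply: Good_pow.
move: Ha => /= /andP[mt Ha].
have Hr : all (fun m' => (m' < m)%N) rest.
  have tr : transitive (fun a b : nat => (b < a)%N) by move=> y x z h1 h2; apply: ltn_trans h2 h1.
  by move: Hs => /= Hp; have := order_path_min tr Hp.
have Hs' : sorted (fun a b : nat => (b < a)%N) rest by move: Hs => /= /path_sorted.
have a'0 : (0 < a * 2 ^ (t - m) + 1)%N by rewrite addn1.
have Hg' := Good_x _ _ (ltn_pmul2l_aux _ t m a0) (Good_pow _ _ (t - m) a0 Hg).
rewrite -[(a * 2 ^ (t - m)).+1]addn1 in Hg'.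
have := IH _ _ m a'0 Hg' Hs' Hr.
have e1 : ((a * 2 ^ (t - m) + 1) * 2 ^ m + \sum_(m0 <- rest) 2 ^ m0 =
           a * 2 ^ t + \sum_(m0 <- m :: rest) 2 ^ m0)%N.
  by rewrite big_cons mulnDl mul1n -mulnA -expnD subnK ?(ltnW mt) // addnA.
rewrite e1; apply: Good_mono => /=; lia.
Qed.

End Aux.

Theorem lemma3p4 (R : realType) (U : set R) (k : nat) (mus : seq nat) :
  open U -> connected U -> U !=set0 ->
  (0 < k)%N ->
  sorted (fun a b : nat => (b < a)%N) mus ->
  k = (\sum_(m <- mus) 2 ^ m)%N ->
  LC_le U (fun x : R => x ^+ k) (head 0%N mus + size mus - 1)%N.
Proof.
move=> _ _ [x0 Ux0] k0 Hs Hk.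
case: mus Hs Hk => [|mu rest] Hs Hk; first by rewrite Hk big_nil in k0.
have tr : transitive (fun a b : nat => (b < a)%N) by move=> y x z h1 h2; apply: ltn_trans h2 h1.
have Ha : all (fun m => (m < mu)%N) rest by move: Hs => /= Hp; have := order_path_min tr Hp.
have Hs' : sorted (fun a b : nat => (b < a)%N) rest by move: Hs => /= /path_sorted.
have := @Good_claim R U rest 1 0 mu isT (@Good1 R U) Hs' Ha.
have eK : k = (2 ^ mu + \sum_(m <- rest) 2 ^ m)%N by rewrite Hk big_cons.
rewrite mul1n add0n -eK => -[C [HR Hp Hn]].
split; first exact: (@nash_mon R U k).
exists (fun y : R => y ^+ 0), C; split.
- exact: (@nash_mon R U 0).
- by exists x0 => //; rewrite expr0 oner_neq0.
- exact: pok_ok.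
- by rewrite /= addnS subn1.
- move=> s x Ux; have := HR s x Ux; rewrite /Kc => ->.
  rewrite !coef_cons coef_nil /=.
  rewrite exp_derive1 expr0 /GRing.scale /=; ring.
Qed.
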